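(* Let $N\ge2$ and let $\mathcal F_{M,N}$ be the free $\Bbbk$-module on symbols $\bar M_0,\dots,\bar M_{N-1}$. For $l,m,k\ge0$ with $l+m+k+1=N$ put $Z_M^{l,m,k}:=\sum_{j=0}^m(-1)^j\binom mj\bar M_{l+j}$. For $0\le k\le\lfloor N/2\rfloor-1$ put $X_k:=Z_M^{k,k+1,N-2k-2}-Z_M^{k+1,k,N-2k-2}$, and for $j\ge0$, $s\ge1$ with $2j+s\le N-1$ put $X_j^{(s)}:=Z_M^{j,j+s,N-2j-s-1}-Z_M^{j+s,j,N-2j-s-1}$. Then: (i) $X_j^{(s)}=\sum_{k=0}^{\lfloor (s-1)/2\rfloor}(-1)^k\binom{s-k-1}{k}X_{j+k}$ for all such $j,s$; (ii) $X_0,\dots,X_{\lfloor N/2\rfloor-1}$ are $\Bbbk$-linearly independent in $\mathcal F_{M,N}$; (iii) the assignment $Z^{l,m,k}\mapsto$ (class of $Z_M^{l,m,k}$) extends to a well-defined isomorphism of $\Bbbk$-modules $\mathcal{ZF}_N\xrightarrow{\sim}\mathcal F_{M,N}/\langle X_0,\dots,X_{\lfloor N/2\rfloor-1}\rangle$.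
   Context: $\Bbbk$ is a commutative ring. $\mathcal F_N$ is the free $\Bbbk$-module on symbols $F^{l,m,k}$, $l,m,k\ge0$, $l+m+k+1=N$; $\mathcal{ZF}_N:=\mathcal F_N/I$ with $I$ generated by all $F^{l,m,k}-F^{m,l,k}$ and all $F^{l,m+1,k}+F^{l+1,m,k}-F^{l,m,k+1}$; $Z^{l,m,k}$ denotes the image of $F^{l,m,k}$. *)

(* Defs.v *)
From HB Require Import structures.
From mathcomp Require Import all_boot all_order all_algebra.
Set Implicit Arguments. Unset Strict Implicit. Unset Printing Implicit Defensive.
Import Order.TTheory GRing.Theory Num.Theory.
Local Open Scope ring_scope.

Definition gen_span (R : comNzRingType) (V : lmodType R) (P : V -> Prop) (v : V) : Prop :=
  exists (n : nat) (c : 'I_n -> R) (g : 'I_n -> V),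
    (forall i, P (g i)) /\ v = \sum_(i < n) c i *: g i.

(* realized as 'rV[R]_N; \bar M_i is the i-th standard basis row vector
   (for i >= N the expression is 0, but it is only used for i < N). *)
Definition Mbar (R : comNzRingType) (N i : nat) : 'rV[R]_N :=
  \row_(j < N) (nat_of_ord j == i)%:R.

(* Z_M^{l,m,k} = sum_{j=0}^m (-1)^j C(m,j) \bar M_{l+j}  (independent of k) *)
Definition ZM (R : comNzRingType) (N l m : nat) : 'rV[R]_N :=
  \sum_(j < m.+1) (((-1) ^+ j * ('C(m, j))%:R) *: Mbar R N (l + j)).

Definition Xk (R : comNzRingType) (N k : nat) : 'rV[R]_N :=
  ZM R N k k.+1 - ZM R N k.+1 k.

Definition Xjs (R : comNzRingType) (N j s : nat) : 'rV[R]_N :=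
  ZM R N j (j + s) - ZM R N (j + s) j.

Notation trip N :=
  {t : 'I_N * 'I_N * 'I_N | (t.1.1 + t.1.2 + t.2).+1 == N}.

Notation FN R N := {ffun trip N -> R^o}.

Definition Fsym (R : comNzRingType) (N l m k : nat) : FN R N :=
  [ffun t : trip N =>
     (((nat_of_ord (val t).1.1 == l) && (nat_of_ord (val t).1.2 == m)
       && (nat_of_ord (val t).2 == k)) : bool)%:R].

Definition Igen (R : comNzRingType) (N : nat) (u : FN R N) : Prop :=
  (exists l m k : nat, (l + m + k + 1)%N = N /\ u = Fsym R N l m k - Fsym R N m l k)
  \/ (exists l m k : nat, (l + m + k + 2)%N = N /\
        u = Fsym R N l m.+1 k + Fsym R N l.+1 m k - Fsym R N l m k.+1).

Definition Xgen (R : comNzRingType) (N : nat) (v : 'rV[R]_N) : Prop :=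
  exists k : nat, (k < N./2)%N /\ v = Xk R N k.

Definition phi (R : comNzRingType) (N : nat) (u : FN R N) : 'rV[R]_N :=
  \sum_(t : trip N) (u t *: ZM R N (val t).1.1 (val t).1.2).

(* Main.v *)
Require Import Defs.
From HB Require Import structures.
From mathcomp Require Import all_boot all_order all_algebra.
From mathcomp Require Import zify ring.
Import Order.TTheory GRing.Theory Num.Theory.
Local Open Scope ring_scope.



Section Span.
Variables (R : comNzRingType) (V : lmodType R) (P : V -> Prop).

Lemma span0 : gen_span P 0.
Proof. by exists 0%N, (fun _ => 0), (fun _ => 0); split => [[]//|]; rewrite big_ord0. Qed.

Lemma spanP v : P v -> gen_span P v.
Proof.
by move=> Pv; exists 1%N, (fun _ => 1), (fun _ => v); split => //; rewrite big_ord1 scale1r.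
Qed.

Lemma spanD u v : gen_span P u -> gen_span P v -> gen_span P (u + v).
Proof.
move=> [n1 [c1 [g1 [P1 ->]]]] [n2 [c2 [g2 [P2 ->]]]].
exists (n1 + n2)%N, (fun i => match split i with inl a => c1 a | inr b => c2 b end),
  (fun i => match split i with inl a => g1 a | inr b => g2 b end).
split; first by move=> i; case: (split i).
rewrite big_split_ord; congr (_ + _); apply: eq_bigr => i _.
  by move: (unsplitK (inl 'I_n2 i)) => /= ->.
by move: (unsplitK (inr 'I_n1 i)) => /= ->.
Qed.

Lemma spanZ a v : gen_span P v -> gen_span P (a *: v).
Proof.
move=> [n [c [g [Pg ->]]]]; exists n, (fun i => a * c i), g; split => //.
by rewrite scaler_sumr; apply: eq_bigr => i _; rewrite scalerA.
Qed.

Lemma spanN v : gen_span P v -> gen_span P (- v).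
Proof. by move=> h; rewrite -scaleN1r; apply: spanZ. Qed.

Lemma spanB u v : gen_span P u -> gen_span P v -> gen_span P (u - v).
Proof. by move=> hu hv; apply: spanD => //; apply: spanN. Qed.

Lemma span_sum (I : finType) (F : I -> V) :
  (forall i, gen_span P (F i)) -> gen_span P (\sum_i F i).
Proof. by move=> h; apply: (big_ind (gen_span P)) => //; [apply: span0|apply: spanD]. Qed.

End Span.



Section Cheb.
Variable (R : comNzRingType) (p : R).
Definition cf (t k : nat) : R := (-1) ^+ k * ('C(t - k, k))%:R * p ^+ k.

Lemma cf_big t k : (t < k)%N -> cf t k = 0.
Proof.
move=> h; rewrite /cf (_ : (t - k)%N = 0%N); last by lia.
by rewrite bin0n (_ : (k == 0%N) = false) ?mulr0 ?mul0r //; lia.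
Qed.

Lemma sum_cf_ext t n : (t < n)%N -> \sum_(k < n) cf t k = \sum_(k < t.+1) cf t k.
Proof.
elim: n => // n IH; rewrite ltnS leq_eqVlt => /orP [/eqP -> //| h].
by rewrite big_ord_recr /= cf_big // addr0 IH.
Qed.

Lemma binS' t k : 'C(t.+1 - k, k.+1) = ('C(t - k, k) + 'C(t - k, k.+1))%N.
Proof.
case: (leqP k t) => h.
  by rewrite subSn // binS addnC.
rewrite (_ : (t.+1 - k)%N = 0%N); last by lia.
rewrite (_ : (t - k)%N = 0%N); last by lia.
by rewrite !bin0n; case: k h.
Qed.

Definition A t := \sum_(k < t.+1) cf t k.

Lemma cf_rec t k : cf t.+2 k.+1 = cf t.+1 k.+1 - p * cf t k.
Proof.
rewrite /cf !subSS binS' natrD exprS exprS.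
move: ('C(t - k, k)) ('C(t - k, k.+1)) => a b. ring.
Qed.

Lemma cf0 t : cf t 0 = 1.
Proof. by rewrite /cf bin0 !expr0 !mulr1. Qed.

Lemma A_rec t : A t.+2 = A t.+1 - p * A t.
Proof.
rewrite /A big_ord_recl [in RHS]big_ord_recl !cf0.
under eq_bigr => k _ do rewrite /bump /= cf_rec.
rewrite sumrB -mulr_sumr sum_cf_ext // big_ord_recr /= cf_big // addr0 addrA.
by congr (_ + _ - _); apply: eq_bigr => i _; rewrite /bump /=.
Qed.

Lemma A_cheb (x y : R) : x + y = 1 -> p = x * y ->
  forall t, y ^+ t.+1 - x ^+ t.+1 = (y - x) * A t.
Proof.
move=> hs hp.
have H : forall t, and (y ^+ t.+1 - x ^+ t.+1 = (y - x) * A t)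
                   (y ^+ t.+2 - x ^+ t.+2 = (y - x) * A t.+1).
  elim=> [|t [IH1 IH2]].
    rewrite /A !big_ord_recr !big_ord0 /= cf0 /cf /= bin0n /=.
    split; first by ring.
    have -> : y ^+ 2 - x ^+ 2 = (y - x) * (x + y) by ring.
    by rewrite hs bin0; ring.
  split => //.
  rewrite A_rec mulrBr mulrCA -IH1 -IH2 hp.
  have -> : y ^+ t.+3 - x ^+ t.+3 = (x + y) * (y ^+ t.+2 - x ^+ t.+2)
     - x * y * (y ^+ t.+1 - x ^+ t.+1) by rewrite !exprS; ring.
  by rewrite hs mul1r.
by move=> t; case: (H t).
Qed.
End Cheb.



Section Poly.
Variable (R : comNzRingType) (N : nat).

Definition pv (p : {poly R}) : 'rV[R]_N := \row_(j < N) p`_j.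

Lemma pvD p q : pv (p + q) = pv p + pv q.
Proof. by apply/rowP => j; rewrite !mxE coefD. Qed.
Lemma pv0 : pv 0 = 0.
Proof. by apply/rowP => j; rewrite !mxE coef0. Qed.
Lemma pvZ a p : pv (a *: p) = a *: pv p.
Proof. by apply/rowP => j; rewrite !mxE coefZ. Qed.
Lemma pvN p : pv (- p) = - pv p.
Proof. by apply/rowP => j; rewrite !mxE coefN. Qed.
Lemma pvB p q : pv (p - q) = pv p - pv q.
Proof. by rewrite pvD pvN. Qed.
Lemma pv_sum (I : finType) (F : I -> {poly R}) : pv (\sum_i F i) = \sum_i pv (F i).
Proof. exact: (big_morph pv pvD pv0). Qed.

Lemma pvXn i : pv 'X^i = Mbar R N i.
Proof. by apply/rowP => j; rewrite !mxE coefXn. Qed.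

Lemma ZM_pv l m : ZM R N l m = pv ('X^l * (1 - 'X) ^+ m).
Proof.
rewrite /ZM exprBn mulr_sumr pv_sum; apply: eq_bigr => i _.
rewrite -pvXn -pvZ; congr pv.
rewrite -mul_polyC polyCM polyC_natr rmorphXn rmorphN rmorph1 exprD expr1n mulr1.
move: ('C(m, i)) (nat_of_ord i) => c k; ring.
Qed.



Definition Xp k : {poly R} := 'X^k * (1 - 'X) ^+ k.+1 - 'X^(k.+1) * (1 - 'X) ^+ k.

Lemma Xk_pv k : Xk R N k = pv (Xp k).
Proof. by rewrite /Xk /Xp !ZM_pv pvB. Qed.

Lemma Xjs_pv j s : Xjs R N j s = pv ('X^j * (1 - 'X) ^+ (j + s) - 'X^(j + s) * (1 - 'X) ^+ j).
Proof. by rewrite /Xjs !ZM_pv pvB. Qed.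

Lemma poly_i j t :
  'X^j * (1 - 'X) ^+ (j + t.+1) - 'X^(j + t.+1) * (1 - 'X) ^+ j =
  \sum_(k < t.+1) (((-1) ^+ k * ('C(t - k, k))%:R) *: Xp (j + k)).
Proof.
have hs : 'X + (1 - 'X) = 1 :> {poly R} by rewrite addrC subrK.
have h := @A_cheb _ ('X * (1 - 'X)) _ _ hs erefl t.
have -> : 'X^j * (1 - 'X) ^+ (j + t.+1) - 'X^(j + t.+1) * (1 - 'X) ^+ j
   = ('X * (1 - 'X)) ^+ j * ((1 - 'X) ^+ t.+1 - 'X ^+ t.+1) :> {poly R}.
  by rewrite !exprD !exprS exprMn; ring.
rewrite h /A mulr_sumr mulr_sumr; apply: eq_bigr => k _.
rewrite /cf /Xp -mul_polyC polyCM polyC_natr rmorphXn rmorphN rmorph1 !exprD.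
move: ('C(t - k, k)) => c; rewrite !exprS !exprMn !exprD; ring.
Qed.

End Poly.

Lemma sum_half (V : zmodType) t (F : nat -> V) :
  (forall k, (t./2 < k)%N -> F k = 0) ->
  \sum_(k < t./2.+1) F k = \sum_(k < t.+1) F k.
Proof.
move=> h; rewrite -!(big_mkord xpredT) [RHS](big_cat_nat _ (n := t./2.+1)) //=; last first.
  by have := odd_double_half t; rewrite -addnn; lia.
rewrite [X in _ = _ + X]big_nat_cond [X in _ = _ + X]big1 ?addr0 // => k /andP [/andP [hk _] _].
by apply: h.
Qed.

Lemma part_i (R : comNzRingType) (N : nat) (j s : nat) : (1 <= s)%N ->
     Xjs R N j s =
     \sum_(k < (s.-1)./2.+1)
        (((-1) ^+ k * ('C(s - k - 1, k))%:R) *: Xk R N (j + k)).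
Proof.
case: s => // t _ /=.
rewrite (@sum_half _ _ (fun k => ((-1) ^+ k * ('C(t.+1 - k - 1, k))%:R) *: Xk R N (j + k))).
  rewrite Xjs_pv poly_i pv_sum; apply: eq_bigr => k _.
  by rewrite pvZ Xk_pv (_ : (t.+1 - k - 1 = t - k)%N) //; lia.
move=> k hk; rewrite bin_small ?mulr0 ?scale0r //.
have := odd_double_half t; rewrite -addnn; lia.
Qed.


Lemma Xp_coef (R : comNzRingType) k i :
  (Xp R k)`_i = if (i < k)%N then 0 else ((1 - 'X) ^+ k.+1 - 'X * (1 - 'X) ^+ k : {poly R})`_(i - k).
Proof.
rewrite -coefXnM; have -> // : Xp R k = 'X^k * ((1 - 'X) ^+ k.+1 - 'X * (1 - 'X) ^+ k).
by rewrite /Xp !exprS; ring.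
Qed.

Lemma Q0 (R : comNzRingType) k :
  ((1 - 'X) ^+ k.+1 - 'X * (1 - 'X) ^+ k : {poly R})`_0 = 1.
Proof.
by rewrite -horner_coef0 !hornerE /= !subr0 expr1n.
Qed.

Lemma part_ii (R : comNzRingType) (N : nat) (c : 'I_(N./2) -> R) :
  \sum_(k < N./2) c k *: Xk R N k = 0 -> forall k, c k = 0.
Proof.
move=> h0.
pose P := \sum_(k < N./2) c k *: Xp R k.
have hP : forall n, (n < N)%N -> P`_n = 0.
  move=> n hn; have /rowP /(_ (Ordinal hn)) := h0.
  rewrite (eq_bigr (fun k => @pv R N (c k *: Xp R k))); last by move=> k _; rewrite pvZ Xk_pv.
  by rewrite -pv_sum !mxE.
have hNN : (N./2 <= N)%N by have := odd_double_half N; rewrite -addnn; lia.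
suff H : forall n (i : 'I_(N./2)), (i < n)%N -> c i = 0.
  by move=> k; apply: (H k.+1).
elim=> // n IH i; rewrite ltnS leq_eqVlt => /orP [/eqP hi|]; last exact: IH.
have hn : (n < N)%N by apply: leq_trans hNN; rewrite -hi.
have := hP n hn; rewrite /P coef_sum (bigD1 i) //= big1 ?addr0.
  by rewrite coefZ Xp_coef hi ltnn subnn Q0 mulr1.
move=> k hk; rewrite coefZ Xp_coef.
case: (ltnP n k) => hnk; first by rewrite mulr0.
rewrite IH ?mul0r //.
by rewrite ltn_neqAle hnk andbT; apply: contra hk => /eqP e; apply/eqP/val_inj; rewrite /= hi e.
Qed.



Lemma zalg (V : zmodType) (a b c p q : V) :
  a - (p - q) = (c - p) - (b - q) + (a + b - c).
Proof.
rewrite !opprB -[a + b - c]addrA addrACA [q - b + _]addrA subrK.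
rewrite [RHS]addrC [q - c + (c - p + a)]addrA [q - c + (c - p)]addrA subrK.
by rewrite addrC.
Qed.

Section Three.
Variables (R : comNzRingType) (N : nat).

Lemma phiD (u w : FN R N) : phi (u + w) = phi u + phi w.
Proof. by rewrite /phi -big_split; apply: eq_bigr => t _; rewrite ffunE scalerDl. Qed.
Lemma phi0 : phi (0 : FN R N) = 0.
Proof. by rewrite /phi big1 // => t _; rewrite ffunE scale0r. Qed.
Lemma phiZ a (u : FN R N) : phi (a *: u) = a *: phi u.
Proof. by rewrite /phi scaler_sumr; apply: eq_bigr => t _; rewrite ffunE scalerA. Qed.
Lemma phiN (u : FN R N) : phi (- u) = - phi u.
Proof. by rewrite -scaleN1r phiZ scaleN1r. Qed.
Lemma phiB (u w : FN R N) : phi (u - w) = phi u - phi w.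
Proof. by rewrite phiD phiN. Qed.
Lemma phi_sum (I : finType) (F : I -> FN R N) : phi (\sum_i F i) = \sum_i phi (F i).
Proof. exact: (big_morph _ phiD phi0). Qed.

Lemma trip_eq (t t' : trip N) :
  nat_of_ord (val t).1.1 = (val t').1.1 -> nat_of_ord (val t).1.2 = (val t').1.2 ->
  nat_of_ord (val t).2 = (val t').2 -> t = t'.
Proof.
case: t => [[[a b] c] ?]; case: t' => [[[a' b'] c'] ?] /= h1 h2 h3; apply: val_inj => /=.
by rewrite (ord_inj h1) (ord_inj h2) (ord_inj h3).
Qed.

Lemma mk_trip l m k : (l + m + k + 1)%N = N ->
  exists t : trip N, [/\ nat_of_ord (val t).1.1 = l, nat_of_ord (val t).1.2 = m &
                          nat_of_ord (val t).2 = k].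
Proof.
move=> h.
have hl : (l < N)%N by lia.
have hm : (m < N)%N by lia.
have hk : (k < N)%N by lia.
have hp : ((Ordinal hl, Ordinal hm, Ordinal hk).1.1 + (Ordinal hl, Ordinal hm, Ordinal hk).1.2
   + (Ordinal hl, Ordinal hm, Ordinal hk).2).+1 == N by apply/eqP => /=; lia.
by exists (exist (fun t : 'I_N * 'I_N * 'I_N => (t.1.1 + t.1.2 + t.2).+1 == N) (Ordinal hl, Ordinal hm, Ordinal hk) hp).
Qed.

Lemma Fsym_at l m k (t : trip N) :
  Fsym R N l m k t = (((nat_of_ord (val t).1.1 == l) && (nat_of_ord (val t).1.2 == m)
       && (nat_of_ord (val t).2 == k)) : bool)%:R.
Proof. by rewrite ffunE. Qed.

Lemma phiF l m k : (l + m + k + 1)%N = N -> phi (Fsym R N l m k) = ZM R N l m.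
Proof.
move=> h; have [t0 [h1 h2 h3]] := @mk_trip l m k h.
rewrite /phi (bigD1 t0) //= big1 ?addr0.
  by rewrite Fsym_at h1 h2 h3 !eqxx scale1r.
move=> t ht; rewrite Fsym_at.
case: eqP => [e1|]; last by rewrite scale0r.
case: eqP => [e2|]; last by rewrite scale0r.
case: eqP => [e3|]; last by rewrite scale0r.
by case/eqP: ht; apply: trip_eq; rewrite ?e1 ?e2 ?e3.
Qed.

Lemma Fsym_decomp (u : FN R N) :
  u = \sum_(t : trip N) u t *: Fsym R N (val t).1.1 (val t).1.2 (val t).2.
Proof.
apply/ffunP => t0; rewrite sum_ffunE (bigD1 t0) //= big1 ?addr0.
  by rewrite ffunE Fsym_at !eqxx /= mulr1n; exact: (esym (@mulr1 R _)).
move=> t ht; rewrite ffunE Fsym_at.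
case: eqP => [e1|]; last by rewrite mulr0n scaler0.
case: eqP => [e2|]; last by rewrite mulr0n scaler0.
case: eqP => [e3|]; last by rewrite mulr0n scaler0.
by case/eqP: ht; apply: trip_eq.
Qed.


Definition psi (v : 'rV[R]_N) : FN R N := \sum_(i < N) v 0 i *: Fsym R N i 0 (N - 1 - i).

Lemma psiD u w : psi (u + w) = psi u + psi w.
Proof. by rewrite /psi -big_split; apply: eq_bigr => t _; rewrite mxE scalerDl. Qed.
Lemma psi0 : psi 0 = 0.
Proof. by rewrite /psi big1 // => t _; rewrite mxE scale0r. Qed.
Lemma psiZ a u : psi (a *: u) = a *: psi u.
Proof. by rewrite /psi scaler_sumr; apply: eq_bigr => t _; rewrite mxE scalerA. Qed.
Lemma psiN u : psi (- u) = - psi u.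
Proof. by rewrite -scaleN1r psiZ scaleN1r. Qed.
Lemma psiB u w : psi (u - w) = psi u - psi w.
Proof. by rewrite psiD psiN. Qed.
Lemma psi_sum (I : finType) (F : I -> 'rV[R]_N) : psi (\sum_i F i) = \sum_i psi (F i).
Proof. exact: (big_morph _ psiD psi0). Qed.

Lemma ZM0 l : ZM R N l 0 = Mbar R N l.
Proof. by rewrite ZM_pv expr0 mulr1 pvXn. Qed.

Lemma ZM_rec l m : ZM R N l m.+1 = ZM R N l m - ZM R N l.+1 m.
Proof. by rewrite !ZM_pv -pvB !exprS; congr pv; ring. Qed.

Lemma phi_psi v : phi (psi v) = v.
Proof.
rewrite /psi phi_sum.
rewrite (eq_bigr (fun i : 'I_N => v 0 i *: Mbar R N i)); last first.
  by move=> i _; rewrite phiZ phiF ?ZM0 //; have := ltn_ord i; lia.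
apply/rowP => j; rewrite summxE (bigD1 j) //= big1 ?addr0.
  by rewrite !mxE eqxx mulr1.
by move=> i hij; rewrite !mxE (_ : (nat_of_ord j == i) = false) ?mulr0 //; apply/negP => /eqP /ord_inj e; rewrite e eqxx in hij.
Qed.

Lemma psiM l : (l < N)%N -> psi (Mbar R N l) = Fsym R N l 0 (N - 1 - l).
Proof.
move=> hl; rewrite /psi (bigD1 (Ordinal hl)) //= big1 ?addr0.
  by rewrite !mxE eqxx scale1r.
move=> i hi; rewrite !mxE (_ : (nat_of_ord i == l) = false) ?scale0r //.
by apply/negP => /eqP e; case/eqP: hi; apply: val_inj.
Qed.

Lemma mainL m : forall l k, (l + m + k + 1)%N = N ->
  gen_span (@Igen R N) (Fsym R N l m k - psi (ZM R N l m)).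
Proof.
elim: m => [|m IH] l k h.
  rewrite ZM0 psiM; last by lia.
  rewrite (_ : (N - 1 - l)%N = k); last by lia.
  by rewrite subrr; apply: span0.
have g : @Igen R N (Fsym R N l m.+1 k + Fsym R N l.+1 m k - Fsym R N l m k.+1).
  by right; exists l, m, k; split => //; lia.
have h1 := IH l k.+1 ltac:(lia).
have h2 := IH l.+1 k ltac:(lia).
have -> : Fsym R N l m.+1 k - psi (ZM R N l m.+1) =
  (Fsym R N l m k.+1 - psi (ZM R N l m)) - (Fsym R N l.+1 m k - psi (ZM R N l.+1 m))
  + (Fsym R N l m.+1 k + Fsym R N l.+1 m k - Fsym R N l m k.+1).
  rewrite ZM_rec psiB.
  move: (Fsym R N l m.+1 k) (Fsym R N l.+1 m k) (Fsym R N l m k.+1)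
        (psi (ZM R N l m)) (psi (ZM R N l.+1 m)) => a b c p q.
  exact: zalg.
apply: spanD; last exact: spanP.
by apply: spanB.
Qed.

Lemma mainL' (u : FN R N) : gen_span (@Igen R N) (u - psi (phi u)).
Proof.
rewrite {1}[u]Fsym_decomp /phi psi_sum -sumrB.
apply: span_sum => t.
rewrite psiZ -scalerBr; apply: spanZ; apply: mainL.
by case: t => [[[a b] c] /= /eqP h]; lia.
Qed.
End Three.



Lemma half_facts n : n = (odd n + n./2 + n./2)%N /\ (odd n <= 1)%N.
Proof. by split; [have := odd_double_half n; rewrite -addnn; lia | apply: leq_b1]. Qed.

Lemma Xjs_span (R : comNzRingType) N j s : (1 <= s)%N -> (2 * j + s <= N - 1)%N ->
  gen_span (@Xgen R N) (Xjs R N j s).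
Proof.
move=> hs hjs; rewrite part_i //; apply: span_sum => k; apply: spanZ; apply: spanP.
exists (j + k)%N; split => //.
have hk := ltn_ord k.
have [e1 o1] := half_facts (s.-1); have [e2 o2] := half_facts N.
lia.
Qed.

Lemma Igen_phi (R : comNzRingType) N (g : FN R N) :
  @Igen R N g -> gen_span (@Xgen R N) (phi g).
Proof.
case=> [[l [m [k [h ->]]]]|[l [m [k [h ->]]]]].
  have h' : (m + l + k + 1)%N = N by rewrite -h (addnC m).
  rewrite phiB (@phiF R N _ _ _ h) (@phiF R N _ _ _ h').
  case: (ltngtP l m) => hlm.
  - have -> : ZM R N l m - ZM R N m l = Xjs R N l (m - l) by rewrite /Xjs subnKC // ltnW.
    by apply: Xjs_span; lia.
  - have -> : ZM R N l m - ZM R N m l = - Xjs R N m (l - m)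
      by rewrite /Xjs subnKC ?opprB // ltnW.
    by apply: spanN; apply: Xjs_span; lia.
  - by rewrite hlm subrr; apply: span0.
have h1 : (l + m.+1 + k + 1)%N = N by rewrite -h; lia.
have h2 : (l.+1 + m + k + 1)%N = N by rewrite -h; lia.
have h3 : (l + m + k.+1 + 1)%N = N by rewrite -h; lia.
rewrite phiB phiD (@phiF R N _ _ _ h1) (@phiF R N _ _ _ h2) (@phiF R N _ _ _ h3).
by rewrite ZM_rec subrK subrr; apply: span0.
Qed.

Lemma liftX (R : comNzRingType) N (v : 'rV[R]_N) :
  gen_span (@Xgen R N) v -> exists w, gen_span (@Igen R N) w /\ phi w = v.
Proof.
move=> [n [c [g [Pg ->]]]].
apply: (big_ind (fun v => exists w, gen_span (@Igen R N) w /\ phi w = v)).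
- by exists 0; split; [apply: span0 | apply: phi0].
- move=> x y [w1 [h1 e1]] [w2 [h2 e2]]; exists (w1 + w2); split.
    by apply: spanD.
  by rewrite phiD e1 e2.
move=> i _; have [k [hk ->]] := Pg i.
have [e o] := half_facts N.
exists (c i *: (Fsym R N k k.+1 (N - 2 * k - 2) - Fsym R N k.+1 k (N - 2 * k - 2))).
split.
  apply: spanZ; apply: spanP; left; exists k, k.+1, (N - 2 * k - 2)%N; split => //; lia.
rewrite phiZ phiB !phiF //; lia.
Qed.

Theorem mainTheorem7 (R : comNzRingType) (N : nat) (hN : (2 <= N)%N) :
  (* (i) *)
  (forall j s : nat, (1 <= s)%N -> (2 * j + s <= N - 1)%N ->
     Xjs R N j s =
     \sum_(k < (s.-1)./2.+1)
        (((-1) ^+ k * ('C(s - k - 1, k))%:R) *: Xk R N (j + k)))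
  (* (ii) *)
  /\ (forall c : 'I_(N./2) -> R,
        \sum_(k < N./2) c k *: Xk R N k = 0 -> forall k, c k = 0)
  (* (iii): the map F_N -> F_{M,N}/<X> induced by phi descends to ZF_N = F_N/I
     (well-defined) and the induced map is bijective *)
  /\ ((forall u : FN R N, gen_span (@Igen R N) u -> gen_span (@Xgen R N) (phi u))
      /\ (forall v : 'rV[R]_N, exists u : FN R N, gen_span (@Xgen R N) (v - phi u))
      /\ (forall u : FN R N, gen_span (@Xgen R N) (phi u) -> gen_span (@Igen R N) u)).
Proof.
split; first by move=> j s hs _; apply: part_i.
split; first exact: part_ii.
split.
  move=> u [n [c [g [Pg ->]]]]; rewrite phi_sum; apply: span_sum => i.
  by rewrite phiZ; apply: spanZ; apply: Igen_phi.
split.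
  by move=> v; exists (@psi R N v); rewrite phi_psi subrr; apply: span0.
move=> u /liftX [w [hw e]].
have -> : u = (u - w) + w by rewrite subrK.
apply: spanD => //.
have := @mainL' R N (u - w); rewrite phiB e subrr psi0 subr0 //.
Qed.
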